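(* Let $R$ be a finite chain ring with $R/\operatorname{rad}R\cong\mathbb{F}_q$ and composition length $m\geq 3$ of ${}_RR$. Then there is no $(q^m+q^{m-1}+1,2)$-arc (hyperoval) in the projective Hjelmslev plane $\mathrm{PHG}(2,R)$.
   Context: A finite chain ring is a finite (not necessarily commutative) ring whose left ideals (equivalently right ideals) form a chain under inclusion; $q$ is the order of its residue field $R/\operatorname{rad}R$ and $m$ is the composition length of ${}_RR$, so $|R|=q^m$. The projective Hjelmslev plane $\mathrm{PHG}(2,R)$ has as points the free rank-$1$ submodules of $R^3_R$, as lines the free rank-$2$ submodules of $R^3_R$, with incidence given by set inclusion. An $(n,u)$-arc in $\mathrm{PHG}(2,R)$ is an $n$-multiset of points such that every line contains at most $u$ of its points, counted with multiplicity. *)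

(* Defs.v *)
From HB Require Import structures.
From mathcomp Require Import all_boot all_order all_algebra.
Set Implicit Arguments. Unset Strict Implicit. Unset Printing Implicit Defensive.
Import GRing.Theory.
Local Open Scope ring_scope.

Section ChainRing.
Variable R : finNzRingType.

Definition is_lideal (I : {set R}) : bool :=
  [&& (0 : R) \in I,
      [forall x in I, [forall y in I, x - y \in I]] &
      [forall r : R, [forall x in I, r * x \in I]]].

Definition chain_ring : Prop :=
  forall I J : {set R}, is_lideal I -> is_lideal J -> (I \subset J) \/ (J \subset I).

Definition is_unitR (x : R) : bool := [exists y : R, (x * y == 1) && (y * x == 1)].

Definition radR : {set R} := [set x : R | [forall r : R, is_unitR (1 - r * x)]].

(* q = |R / rad R|, the order of the residue field *)
Definition residue_order : nat := (#|[set: R]| %/ #|radR|)%N.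

(* composition length of _R R: the maximal length of a strictly increasing
   chain of left submodules (= left ideals) of _R R *)
Definition lideal_chain (s : seq {set R}) : Prop :=
  all is_lideal s /\ sorted (fun A B : {set R} => A \proper B) s.

Definition comp_length (m : nat) : Prop :=
  (exists s, lideal_chain s /\ size s = m.+1) /\
  (forall s, lideal_chain s -> (size s <= m.+1)%N).

Definition vec := {ffun 'I_3 -> R}.
Definition vadd (x y : vec) : vec := [ffun i => x i + y i].
Definition vsmul (x : vec) (r : R) : vec := [ffun i => x i * r].
Definition vzero : vec := [ffun _ => 0].

(* points: free rank-1 submodules of R^3_R *)
Definition is_point (P : {set vec}) : bool :=
  [exists x : vec,
    (P == [set vsmul x r | r : R]) &&
    [forall r : R, (vsmul x r == vzero) ==> (r == 0)]].

(* lines: free rank-2 submodules of R^3_R *)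
Definition is_line (L : {set vec}) : bool :=
  [exists x : vec, [exists y : vec,
    (L == [set vadd (vsmul x r) (vsmul y s) | r : R, s : R]) &&
    [forall r : R, [forall s : R,
       (vadd (vsmul x r) (vsmul y s) == vzero) ==> ((r == 0) && (s == 0))]]]].

(* an (n,u)-arc: a multiset of points (multiplicity function k, supported on
   points) of total size n, with every line containing at most u points
   counted with multiplicity; incidence is inclusion *)
Definition is_arc (k : {set vec} -> nat) (n u : nat) : Prop :=
  (forall P, (0 < k P)%N -> is_point P) /\
  (\sum_(P : {set vec} | is_point P) k P)%N = n /\
  (forall L, is_line L -> (\sum_(P : {set vec} | is_point P && (P \subset L)) k P <= u)%N).

End ChainRing.

(* Main.v *)
Require Import Defs.
From mathcomp Require Import all_boot all_order all_algebra all_fingroup.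
From mathcomp Require Import zify.
Set Implicit Arguments. Unset Strict Implicit. Unset Printing Implicit Defensive.
Import GRing.Theory.

Section Ring.
Local Open Scope ring_scope.
Variable R : finNzRingType.
Implicit Types x y z a b c d r s u : R.

Lemma rinv_linv x y : x * y = 1 -> y * x = 1.
Proof.
move=> xy.
have injy : injective (fun r : R => y * r).
  by move=> r1 r2 /= e; rewrite -[r1]mul1r -[r2]mul1r -xy -!mulrA e.
have [z yz] : exists z, y * z = 1.
  by have [g _ gK] := injF_bij injy; exists (g 1); rewrite gK.
have xz : x = z by rewrite -[x]mulr1 -yz mulrA xy mul1r.
by rewrite xz.
Qed.

Lemma unitPr x : reflect (exists y, x * y = 1) (is_unitR x).
Proof.
apply: (iffP existsP) => [[y /andP[/eqP h _]]|[y h]]; first by exists y.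
by exists y; rewrite h (rinv_linv h) !eqxx.
Qed.

Lemma unitPl x : reflect (exists y, y * x = 1) (is_unitR x).
Proof.
apply: (iffP (unitPr x)) => [[y h]|[y h]]; exists y; exact: rinv_linv.
Qed.

Definition uinv x := odflt 0 [pick y | x * y == 1].

Lemma uinvP x : is_unitR x -> x * uinv x = 1 /\ uinv x * x = 1.
Proof.
move/unitPr=> ex; rewrite /uinv; case: pickP => [y /eqP h|h] /=.
  by split=> //; exact: rinv_linv.
by exfalso; case: ex => y hy; have := h y; rewrite hy eqxx.
Qed.

Lemma mulrV_u x : is_unitR x -> x * uinv x = 1. Proof. by case/uinvP. Qed.
Lemma mulVr_u x : is_unitR x -> uinv x * x = 1. Proof. by case/uinvP. Qed.

Lemma unit_uinv x : is_unitR x -> is_unitR (uinv x).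
Proof. by move=> ux; apply/unitPr; exists x; rewrite mulVr_u. Qed.

Lemma unit1 : is_unitR (1 : R).
Proof. by apply/unitPr; exists 1; rewrite mulr1. Qed.

Lemma nunit0 : ~~ is_unitR (0 : R).
Proof. by apply/unitPr => -[y]; rewrite mul0r => /eqP; rewrite eq_sym oner_eq0. Qed.

Lemma unitM x y : is_unitR x -> is_unitR y -> is_unitR (x * y).
Proof.
move=> ux uy; apply/unitPr; exists (uinv y * uinv x).
by rewrite mulrA -(mulrA x) mulrV_u // mulr1 mulrV_u.
Qed.

Lemma unitMl x y : is_unitR (x * y) -> is_unitR y -> is_unitR x.
Proof.
move=> uxy uy; apply/unitPr; exists (y * uinv (x * y)).
by rewrite mulrA mulrV_u.
Qed.

Lemma unitMr x y : is_unitR (x * y) -> is_unitR x -> is_unitR y.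
Proof.
move=> uxy ux; apply/unitPl; exists (uinv (x * y) * x).
by rewrite -mulrA mulVr_u.
Qed.

Lemma unitN x : is_unitR x -> is_unitR (- x).
Proof. by move=> ux; apply/unitPr; exists (- uinv x); rewrite mulrNN mulrV_u. Qed.

Lemma radP x : reflect (forall r, is_unitR (1 - r * x)) (x \in radR R).
Proof. by rewrite inE; apply: (iffP forallP). Qed.

Lemma rad0 : (0 : R) \in radR R.
Proof. by apply/radP => r; rewrite mulr0 subr0 unit1. Qed.

Lemma radMl r x : x \in radR R -> r * x \in radR R.
Proof. by move/radP=> h; apply/radP => s; rewrite mulrA h. Qed.

Lemma radN x : x \in radR R -> - x \in radR R.
Proof. by move=> h; rewrite -mulN1r radMl. Qed.

Lemma unitD_rad u x : is_unitR u -> x \in radR R -> is_unitR (u + x).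
Proof.
move=> uu /radP h.
have -> : u + x = u * (1 - (- uinv u) * x).
  by rewrite mulrBr mulr1 mulNr mulrN opprK mulrA mulrV_u // mul1r.
exact: unitM.
Qed.

Lemma radD x y : x \in radR R -> y \in radR R -> x + y \in radR R.
Proof.
move=> /radP hx /radP hy; apply/radP => r.
have -> : 1 - r * (x + y) = (1 - r * x) + (- (r * y)) by rewrite mulrDr opprD addrA.
apply: unitD_rad => //; apply: radN; apply: radMl; exact/radP.
Qed.

Lemma radB x y : x \in radR R -> y \in radR R -> x - y \in radR R.
Proof. by move=> hx hy; rewrite radD // radN. Qed.

Lemma rad_nunit x : x \in radR R -> ~~ is_unitR x.
Proof.
move=> /radP h; apply/negP => ux; have := h (uinv x).
by rewrite mulVr_u // subrr (negPf nunit0).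
Qed.

Lemma rad1 : (1 : R) \notin radR R.
Proof. by apply/negP => /rad_nunit; rewrite unit1. Qed.

End Ring.

Section Len.
Local Open Scope ring_scope.
Variable R : finNzRingType.
Implicit Types x y z a b c d r s u : R.

Lemma rad_group_set : group_set (radR R).
Proof.
apply/group_setP; split; first exact: rad0.
by move=> x y hx hy; exact: radD.
Qed.

Definition radG := Group rad_group_set.

Lemma card_R_rad : #|[set: R]| = (residue_order R * #|radR R|)%N.
Proof.
rewrite /residue_order.
have := Lagrange (subsetT radG) => /= h.
by rewrite divnK // -h dvdn_mulr.
Qed.

Lemma residue_indexE : residue_order R = #|[set: R] : radR R|%g.
Proof.
rewrite /residue_order.
have := Lagrange (subsetT radG) => /= h.
by rewrite -{1}h mulKn // card_gt0; apply/set0Pn; exists 0; exact: rad0.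
Qed.

Lemma rad_card_gt0 : (0 < #|radR R|)%N.
Proof. by rewrite card_gt0; apply/set0Pn; exists 0; exact: rad0. Qed.

Lemma residue_ge2 : (2 <= residue_order R)%N.
Proof.
have h1 : (#|radR R| < #|[set: R]|)%N.
  apply: proper_card; rewrite properE subsetT /=; apply/subsetPn.
  by exists 1; [rewrite inE | exact: rad1].
move: h1; rewrite card_R_rad.
move=> h; rewrite leqNgt; apply/negP; rewrite ltnS => q1.
by move: h; rewrite ltnNge (leq_trans (leq_mul q1 (leqnn _))) // mul1n.
Qed.

Lemma lid0 (I : {set R}) : is_lideal I -> 0 \in I.
Proof. by case/and3P. Qed.
Lemma lidB (I : {set R}) x y : is_lideal I -> x \in I -> y \in I -> x - y \in I.
Proof. by case/and3P=> _ /forallP h _ hx hy; move: (h x) => /implyP/(_ hx)/forallP/(_ y)/implyP/(_ hy). Qed.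
Lemma lidM (I : {set R}) r x : is_lideal I -> x \in I -> r * x \in I.
Proof. by case/and3P=> _ _ /forallP h hx; move: (h r) => /forallP/(_ x)/implyP/(_ hx). Qed.
Lemma lidN (I : {set R}) x : is_lideal I -> x \in I -> - x \in I.
Proof. by move=> hI hx; rewrite -sub0r lidB // lid0. Qed.
Lemma lidD (I : {set R}) x y : is_lideal I -> x \in I -> y \in I -> x + y \in I.
Proof. by move=> hI hx hy; rewrite -[y]opprK lidB // lidN. Qed.

Lemma lidealP (I : {set R}) : 0 \in I -> (forall x y, x \in I -> y \in I -> x - y \in I) ->
  (forall r x, x \in I -> r * x \in I) -> is_lideal I.
Proof.
move=> h0 hB hM; apply/and3P; split=> //.
  by apply/forallP=> x; apply/implyP=> hx; apply/forallP=> y; apply/implyP=> hy; exact: hB.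
by apply/forallP=> r; apply/forallP=> x; apply/implyP=> hx; exact: hM.
Qed.

Lemma rad_lideal : is_lideal (radR R).
Proof. apply: lidealP; [exact: rad0 | exact: radB | exact: radMl]. Qed.

Lemma setT_lideal : is_lideal [set: R].
Proof. by apply: lidealP => *; rewrite inE. Qed.

Definition spanJ (J : {set R}) y := [set j + b * y | j in J, b in [set: R]].

Lemma spanJ_lideal J y : is_lideal J -> is_lideal (spanJ J y).
Proof.
move=> hJ; apply: lidealP.
- by apply/imset2P; exists 0 0; rewrite ?inE ?lid0 // mul0r addr0.
- move=> _ _ /imset2P[j b hj _ ->] /imset2P[j' b' hj' _ ->].
  apply/imset2P; exists (j - j') (b - b'); rewrite ?inE ?lidB //.
  by rewrite mulrBl opprD !addrA; congr (_ + _); rewrite -!addrA; congr (_ + _); rewrite addrC.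
- move=> r _ /imset2P[j b hj _ ->]; apply/imset2P; exists (r * j) (r * b); rewrite ?inE ?lidM //.
  by rewrite mulrDr mulrA.
Qed.

Lemma spanJ_max (I J : {set R}) y : is_lideal I -> is_lideal J -> J \proper I ->
  (forall K, is_lideal K -> J \proper K -> K \subset I -> K = I) ->
  y \in I -> y \notin J -> spanJ J y = I.
Proof.
move=> hI hJ JI hmax yI yJ; apply: hmax; first exact: spanJ_lideal.
- rewrite properE; apply/andP; split.
    by apply/subsetP=> j hj; apply/imset2P; exists j 0; rewrite ?inE // mul0r addr0.
  apply/subsetPn; exists y => //; apply/imset2P; exists 0 1; rewrite ?inE ?lid0 //.
  by rewrite mul1r add0r.
- apply/subsetP=> _ /imset2P[j b hj _ ->]; rewrite lidD ?lidM //.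
  by move/proper_sub/subsetP: JI; apply.
Qed.

Lemma step_card (I J : {set R}) : is_lideal I -> is_lideal J -> J \proper I ->
  (forall K, is_lideal K -> J \proper K -> K \subset I -> K = I) ->
  (#|I| <= residue_order R * #|J|)%N.
Proof.
move=> hI hJ JI hmax.
have [x xI xJ] : exists2 x, x \in I & x \notin J.
  by move/properP: JI => [_ [x ? ?]]; exists x.
have eI := spanJ_max hI hJ JI hmax xI xJ.
have radx : forall a, a \in radR R -> a * x \in J.
  move=> a ha; apply/negPn/negP=> hax.
  have haxI : a * x \in I by rewrite lidM.
  have := spanJ_max hI hJ JI hmax haxI hax; move/setP/(_ x); rewrite xI.
  case/imset2P=> j b hj _ ex.
  have u : is_unitR (1 - b * a) by move/radP: ha; apply.
  have : (1 - b * a) * x = j by rewrite mulrBl mul1r {1}ex -mulrA addrK.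
  move=> e; have : x = uinv (1 - b * a) * j by rewrite -e mulrA mulVr_u // mul1r.
  by move=> ex2; move: xJ; rewrite ex2 lidM.
pose C := [set repr X | X in rcosets (radR R) [set: R]].
have hC : (#|C| <= residue_order R)%N by rewrite residue_indexE leq_imset_card.
have : I \subset [set t.1 + t.2 * x | t in setX J C].
  apply/subsetP=> y; rewrite -{1}eI => /imset2P[j a hj _ ->].
  have ha : a \in (radR R :* a)%g by rewrite (rcoset_refl radG).
  have hr := mem_repr a ha.
  set c := repr _ in hr.
  have cC : c \in C.
    apply/imsetP; exists (radR R :* a)%g; last by [].
    by apply/imsetP; exists a; rewrite ?inE // rcosetE.
  move: hr; rewrite mem_rcoset => hr.
  apply/imsetP; exists (j - (c * x - a * x), c); first by rewrite inE /= cC andbT lidB // -mulrBl radx.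
  by rewrite /= opprB -addrA subrK.
move/subset_leq_card => h.
apply: (leq_trans h); apply: (leq_trans (leq_imset_card _ _)).
by rewrite cardsX mulnC leq_mul2r hC orbT.
Qed.

End Len.

Lemma sorted_rcons2 (T : Type) (e : rel T) s a b :
  sorted e (rcons s a) -> e a b -> sorted e (rcons (rcons s a) b).
Proof.
case: s => [|x s] /=; first by move=> _ h; rewrite h.
by rewrite !rcons_path last_rcons => -> ->.
Qed.

Section Chain.
Local Open Scope ring_scope.
Variable R : finNzRingType.

Lemma set0_lideal : is_lideal [set (0 : R)].
Proof.
apply: lidealP; first by rewrite inE.
- by move=> x y; rewrite !inE => /eqP-> /eqP->; rewrite subrr.
- by move=> r x; rewrite !inE => /eqP->; rewrite mulr0.
Qed.

Lemma chain_from n : forall I : {set R}, (#|I| <= n)%N -> is_lideal I ->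
  exists s, lideal_chain (rcons s I) /\ (#|I| <= residue_order R ^ size s)%N.
Proof.
elim: n => [|n IH] I hn hI.
  by exfalso; move: hn; rewrite leqn0 cards_eq0 => /eqP eI; move: (lid0 hI); rewrite eI inE.
case: (leqP #|I| 1) => h1.
  by exists [::]; split; [split; [rewrite /= hI | by []] | rewrite expn0].
have h0 : is_lideal [set (0 : R)] && ([set 0] \proper I).
  rewrite set0_lideal /= properEcard cards1 h1 andbT; apply/subsetP => x; rewrite inE => /eqP->.
  exact: lid0.
case: (@arg_maxnP _ [set 0] (fun J : {set R} => is_lideal J && (J \proper I)) (fun J : {set R} => #|J|) h0) => J /andP[hJ JI] Jmax.
have hmax : forall K, is_lideal K -> J \proper K -> K \subset I -> K = I.
  move=> K hK JK KI; apply/eqP; apply/negP => /negP nKI.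
  have KI' : K \proper I by rewrite properEneq nKI.
  have := Jmax K; rewrite hK KI' => /(_ isT).
  by move=> hle; have := leq_trans (proper_card JK) hle; rewrite ltnn.
have hJn : (#|J| <= n)%N.
  by rewrite -ltnS (leq_trans (proper_card JI)).
have [s [[hs1 hs2] hs3]] := IH J hJn hJ.
exists (rcons s J); split; first split.
- by rewrite all_rcons hI hs1.
- exact: sorted_rcons2.
rewrite size_rcons expnS (leq_trans (step_card hI hJ JI hmax)) //.
by rewrite leq_mul2l hs3 orbT.
Qed.

Lemma rad_bound m : comp_length R m -> (#|radR R| <= residue_order R ^ (m - 1))%N.
Proof.
move=> [_ hm].
have [s [[hs1 hs2] hs3]] := chain_from (leqnn _) (rad_lideal R).
have hc : lideal_chain (rcons (rcons s (radR R)) [set: R]).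
  split; first by rewrite all_rcons setT_lideal.
  apply: sorted_rcons2 => //; rewrite properT; apply/eqP => e.
  by have := rad1 R; rewrite e inE.
have := hm _ hc; rewrite !size_rcons !ltnS => hsm.
apply: (leq_trans hs3); apply: leq_pexp2l; first by rewrite (leq_trans _ (residue_ge2 R)).
by rewrite leq_subRL ?addn1 // (leq_trans _ hsm).
Qed.

End Chain.

Section ChainAlg.
Local Open Scope ring_scope.
Variable R : finNzRingType.
Hypothesis chR : chain_ring R.
Implicit Types x y z a b c d r s u : R.

Definition lid x := [set a * x | a in [set: R]].

Lemma lid_lideal x : is_lideal (lid x).
Proof.
apply: lidealP.
- by apply/imsetP; exists 0; rewrite ?inE ?mul0r.
- move=> _ _ /imsetP[a _ ->] /imsetP[b _ ->]; apply/imsetP; exists (a - b); rewrite ?inE //.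
  by rewrite mulrBl.
- by move=> r _ /imsetP[a _ ->]; apply/imsetP; exists (r * a); rewrite ?inE ?mulrA.
Qed.

Lemma lid_self x : x \in lid x.
Proof. by apply/imsetP; exists 1; rewrite ?inE ?mul1r. Qed.

Lemma chainP c d : (exists r, c = r * d) \/ (exists r, d = r * c).
Proof.
case: (chR (lid_lideal c) (lid_lideal d)) => /subsetP h.
  by left; have /imsetP[r _ ->] := h _ (lid_self c); exists r.
by right; have /imsetP[r _ ->] := h _ (lid_self d); exists r.
Qed.

Lemma radE x : (x \in radR R) = ~~ is_unitR x.
Proof.
apply/idP/idP; first exact: rad_nunit.
move=> nu; apply/radP => r; case: (boolP (is_unitR (1 - r * x))) => // nu2.
case: (chainP x (1 - r * x)) => [[a ea]|[a ea]].
- case/negP: nu2; apply/unitPl; exists (1 + r * a).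
  by rewrite mulrDl mul1r -mulrA -ea subrK.
- case/negP: nu; apply/unitPl; exists (a + r).
  by rewrite mulrDl -ea subrK.
Qed.

Lemma radMr x r : x \in radR R -> x * r \in radR R.
Proof.
rewrite !radE => nu; apply/negP => u; case/negP: nu.
by apply/unitPr; exists (r * uinv (x * r)); rewrite mulrA mulrV_u.
Qed.

Lemma nrad_unit x : x \notin radR R -> is_unitR x.
Proof. by rewrite radE negbK. Qed.

Lemma left_ann x : x \in radR R -> exists2 s, s != 0 & s * x = 0.
Proof.
rewrite radE => nu.
case: (boolP [exists s, (s != 0) && (s * x == 0)]) => [/existsP[s /andP[? /eqP ?]]|h].
  by exists s.
have inj : injective (fun r => r * x).
  move=> r1 r2 /= e; apply/eqP; rewrite -subr_eq0; apply/negPn/negP => hn.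
  move/negP: h; apply; apply/existsP; exists (r1 - r2); rewrite hn /=.
  by rewrite mulrBl e subrr.
have [g _ gK] := injF_bij inj.
by case/negP: nu; apply/unitPl; exists (g 1); rewrite /= gK.
Qed.

End ChainAlg.

Section NoChain.
Local Open Scope ring_scope.
Variable R : finNzRingType.
Implicit Types x y z a b c d r s u : R.

Lemma right_ann_rad : exists2 s : R, s != 0 & forall a, a \in radR R -> a * s = 0.
Proof.
have h10 : (1 : R) != 0 by rewrite oner_eq0.
case: (@arg_minnP _ 1 (fun s : R => s != 0) (fun s : R => #|[set b * s | b in [set: R]]|) h10).
move=> s s0 smin; exists s => // a ha; apply/eqP; apply/negPn/negP => as0.
have sub : [set b * (a * s) | b in [set: R]] \subset [set b * s | b in [set: R]].
  by apply/subsetP=> _ /imsetP[b _ ->]; apply/imsetP; exists (b * a); rewrite ?inE ?mulrA.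
have := smin _ as0 => hle.
have e : [set b * (a * s) | b in [set: R]] = [set b * s | b in [set: R]].
  by apply/eqP; rewrite eqEcard sub hle.
have : s \in [set b * (a * s) | b in [set: R]].
  by rewrite e; apply/imsetP; exists 1; rewrite ?inE ?mul1r.
case/imsetP=> b _ eb.
have u : is_unitR (1 - b * a) by move/radP: ha; apply.
have : (1 - b * a) * s = 0 by rewrite mulrBl mul1r -mulrA -eb subrr.
move=> e2; move/negP: s0; apply.
by rewrite -[s]mul1r -(mulVr_u u) -mulrA e2 mulr0.
Qed.

End NoChain.

Section Vec.
Local Open Scope ring_scope.
Variable R : finNzRingType.
Implicit Types a b c d r s u : R.
Implicit Types x y z w v e : vec R.

Definition span1 x := [set vsmul x r | r : R].
Definition span2 x y := [set vadd (vsmul x r) (vsmul y s) | r : R, s : R].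
Definition vfree x := [forall r : R, (vsmul x r == vzero R) ==> (r == 0)].
Definition indep x y := [forall r : R, [forall s : R,
       (vadd (vsmul x r) (vsmul y s) == vzero R) ==> ((r == 0) && (s == 0))]].

Lemma vaddE x y l : vadd x y l = x l + y l. Proof. by rewrite ffunE. Qed.
Lemma vsmulE x r l : vsmul x r l = x l * r. Proof. by rewrite ffunE. Qed.
Lemma vzeroE l : vzero R l = 0. Proof. by rewrite ffunE. Qed.

Lemma pointE P : is_point P = [exists x, (P == span1 x) && vfree x].
Proof. by []. Qed.
Lemma lineE L : is_line L = [exists x, [exists y, (L == span2 x y) && indep x y]].
Proof. by []. Qed.

Lemma vfreeP x : reflect (forall r, vsmul x r = vzero R -> r = 0) (vfree x).
Proof.
apply: (iffP forallP) => [h r e|h r]; last by apply/implyP => /eqP/h ->.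
by move/implyP: (h r); rewrite e eqxx => /(_ isT)/eqP.
Qed.

Lemma indepP x y : reflect (forall r s, vadd (vsmul x r) (vsmul y s) = vzero R -> r = 0 /\ s = 0)
  (indep x y).
Proof.
apply: (iffP forallP) => [h r s e|h r].
  move/forallP: (h r) => /(_ s) /implyP; rewrite e eqxx => /(_ isT) /andP[/eqP ? /eqP ?].
  by [].
apply/forallP => s; apply/implyP => /eqP /h [-> ->]; by rewrite !eqxx.
Qed.

Lemma vecP x y : (forall l, x l = y l) -> x = y.
Proof. by move=> h; apply/ffunP. Qed.

Lemma vsmul_free_unit x : (exists i, is_unitR (x i)) -> vfree x.
Proof.
case=> i ui; apply/vfreeP => r /ffunP/(_ i); rewrite vsmulE vzeroE => e.
by rewrite -[r]mul1r -(mulVr_u ui) -mulrA e mulr0.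
Qed.

Lemma free_unit (chR : chain_ring R) x : vfree x -> exists i, is_unitR (x i).
Proof.
move=> fx; case: (boolP [exists i, is_unitR (x i)]) => [/existsP[i ?]|h]; first by exists i.
have [s s0 hs] := right_ann_rad R.
have : s = 0.
  move/vfreeP: fx; apply; apply/vecP => l; rewrite vsmulE vzeroE; apply: hs.
  rewrite radE //; apply/negP => u; move/negP: h; apply; apply/existsP; exists l; exact: u.
by move/eqP; rewrite (negPf s0).
Qed.

End Vec.

Section Span.
Local Open Scope ring_scope.
Variable R : finNzRingType.
Implicit Types a b c d r s u : R.
Implicit Types x y z w v e : vec R.

Lemma mem_span2 x y r s : vadd (vsmul x r) (vsmul y s) \in span2 x y.
Proof. by apply/imset2P; exists r s. Qed.

Lemma span2P x y v : reflect (exists r s, v = vadd (vsmul x r) (vsmul y s)) (v \in span2 x y).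
Proof.
by apply: (iffP imset2P) => [[r s _ _ ->]|[r [s ->]]]; [exists r, s | exists r s].
Qed.

Lemma span2C x y : span2 x y = span2 y x.
Proof.
apply/setP => v; apply/span2P/span2P => -[r [s ->]]; exists s, r;
  by apply/vecP => l; rewrite !vaddE addrC.
Qed.

Lemma indepC x y : indep x y -> indep y x.
Proof.
move/indepP => h; apply/indepP => r s e.
have [] := h s r; last by move=> -> ->.
by rewrite -e; apply/vecP => l; rewrite !vaddE addrC.
Qed.

Lemma span2_change x (b : vec R) u c : is_unitR u ->
  span2 x b = span2 x (vadd (vsmul b u) (vsmul x c)).
Proof.
move=> uu; apply/setP => v; apply/span2P/span2P => -[r [s ->]].
  exists (r - c * (uinv u * s)), (uinv u * s); apply/vecP => l.
  rewrite !vaddE !vsmulE !vaddE !vsmulE mulrBr mulrDl !mulrA -(mulrA (b l) u) mulrV_u // mulr1.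
  by rewrite [b l * s + _]addrC addrA subrK.
exists (r + c * s), (u * s); apply/vecP => l.
rewrite !vaddE !vsmulE !vaddE !vsmulE mulrDr mulrDl !mulrA.
by rewrite addrA [x l * r + _ + _]addrAC.
Qed.

Lemma indep_change x (b : vec R) u c : is_unitR u -> indep x b ->
  indep x (vadd (vsmul b u) (vsmul x c)).
Proof.
move=> uu /indepP h; apply/indepP => r s e.
have [h1 h2] : r + c * s = 0 /\ u * s = 0.
  apply: h; rewrite -e; apply/vecP => l.
  rewrite !vaddE !vsmulE !vaddE !vsmulE mulrDr mulrDl !mulrA.
  by rewrite addrA [x l * r + _ + _]addrAC.
have s0 : s = 0 by rewrite -[s]mul1r -(mulVr_u uu) -mulrA h2 mulr0.
by split=> //; move: h1; rewrite s0 mulr0 addr0.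
Qed.

Lemma span2_sub1 x y v : v \in span2 x y -> span1 v \subset span2 x y.
Proof.
case/span2P => r [s ->]; apply/subsetP => _ /imsetP[t _ ->].
apply/span2P; exists (r * t), (s * t); apply/vecP => l.
by rewrite !vsmulE !vaddE !vsmulE mulrDl !mulrA.
Qed.

Lemma span1_self x : x \in span1 x.
Proof. by apply/imsetP; exists 1; rewrite // ; apply/vecP => l; rewrite vsmulE mulr1. Qed.

Lemma span1_unit x u : is_unitR u -> span1 (vsmul x u) = span1 x.
Proof.
move=> uu; apply/setP => v; apply/imsetP/imsetP => -[r _ ->].
  by exists (u * r); rewrite //; apply/vecP => l; rewrite !vsmulE mulrA.
exists (uinv u * r) => //; apply/vecP => l; rewrite !vsmulE mulrA -(mulrA (x l)) mulrV_u //.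
by rewrite mulr1.
Qed.

End Span.

Lemma ord3_cases (i j k l : 'I_3) : i != j -> i != k -> j != k -> [|| l == i, l == j | l == k].
Proof.
by case: i => [[|[|[|?]]] ?] //; case: j => [[|[|[|?]]] ?] //; case: k => [[|[|[|?]]] ?] //;
   case: l => [[|[|[|?]]] ?].
Qed.

Lemma ord3_other (i : 'I_3) : exists j k : 'I_3, [&& i != j, i != k & j != k].
Proof.
case: i => [[|[|[|?]]] ?] //.
- by exists (Ordinal (isT : (1 < 3)%N)), (Ordinal (isT : (2 < 3)%N)).
- by exists (Ordinal (isT : (0 < 3)%N)), (Ordinal (isT : (2 < 3)%N)).
- by exists (Ordinal (isT : (0 < 3)%N)), (Ordinal (isT : (1 < 3)%N)).
Qed.

Section Geo.
Local Open Scope ring_scope.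
Variable R : finNzRingType.
Implicit Types a b c d r s u : R.
Implicit Types x y z w v e : vec R.

Definition mk3 (i j : 'I_3) a b c : vec R :=
  [ffun l => if l == i then a else if l == j then b else c].

Lemma mk3_i i j a b c : mk3 i j a b c i = a.
Proof. by rewrite ffunE eqxx. Qed.
Lemma mk3_j i j a b c : i != j -> mk3 i j a b c j = b.
Proof. by move=> h; rewrite ffunE eq_sym (negPf h) eqxx. Qed.
Lemma mk3_k i j k a b c : i != k -> j != k -> mk3 i j a b c k = c.
Proof. by move=> h1 h2; rewrite ffunE eq_sym (negPf h1) eq_sym (negPf h2). Qed.

Lemma line_xw x w (i l : 'I_3) : x i = 1 -> w i = 0 -> l != i -> w l = 1 ->
  is_line (span2 x w).
Proof.
move=> hx hw hli hwl; rewrite lineE; apply/existsP; exists x; apply/existsP; exists w.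
rewrite eqxx /=; apply/indepP => r s /ffunP e.
have := e i; rewrite vaddE !vsmulE vzeroE hx hw mul1r mul0r addr0 => r0.
split=> //; have := e l; rewrite vaddE !vsmulE vzeroE hwl r0 mulr0 add0r mul1r //.
Qed.

Lemma x_in_span2 x w : x \in span2 x w.
Proof.
apply/span2P; exists 1, 0; apply/vecP => l.
by rewrite vaddE !vsmulE mulr1 mulr0 addr0.
Qed.

Lemma notin_span2 x w1 w2 (i l l' : 'I_3) : x i = 1 -> w1 i = 0 -> w2 i = 0 ->
  w1 l = 1 -> w2 l = 1 -> w1 l' != w2 l' -> w2 \notin span2 x w1.
Proof.
move=> hx h1 h2 h1l h2l hne; apply/negP => /span2P[a [b /ffunP e]].
have := e i; rewrite vaddE !vsmulE hx h1 h2 mul1r mul0r addr0 => a0.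
have := e l; rewrite vaddE !vsmulE -a0 mulr0 add0r h1l h2l mul1r => b1.
by move: hne; rewrite (e l') vaddE !vsmulE -a0 mulr0 add0r -b1 mulr1 eqxx.
Qed.

Lemma dec_in x w beta e d : (forall l, e l = w l * d) ->
  vadd (vsmul x beta) e \in span2 x w.
Proof.
move=> h; apply/span2P; exists beta, d; apply/vecP => l.
by rewrite !vaddE !vsmulE h.
Qed.

Lemma through (chR : chain_ring R) x y (i j k : 'I_3) : x i = 1 ->
  [&& i != j, i != k & j != k] ->
  exists w, is_line (span2 x w) /\ y \in span2 x w.
Proof.
move=> hx /and3P[hij hik hjk].
pose e := vadd y (vsmul x (- y i)).
have ey : y = vadd (vsmul x (y i)) e.
  by apply/vecP => l; rewrite !vaddE !vsmulE mulrN addrC subrK.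
have ei : e i = 0 by rewrite vaddE vsmulE hx mul1r subrr.
case: (chainP chR (e j) (e k)) => [[r er]|[r er]].
- exists (mk3 i j 0 r 1); split.
    by apply: (line_xw (l := k) hx (mk3_i _ _ _ _ _)); [rewrite eq_sym | exact: mk3_k].
  rewrite {1}ey; apply: (@dec_in x _ (y i) e (e k)) => l.
  case/or3P: (ord3_cases l hij hik hjk) => /eqP ->.
  + by rewrite mk3_i ei mul0r.
  + by rewrite mk3_j.
  + by rewrite mk3_k // mul1r.
- exists (mk3 i j 0 1 r); split.
    by apply: (line_xw (l := j) hx (mk3_i _ _ _ _ _)); [rewrite eq_sym | exact: mk3_j].
  rewrite {1}ey; apply: (@dec_in x _ (y i) e (e j)) => l.
  case/or3P: (ord3_cases l hij hik hjk) => /eqP ->.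
  + by rewrite mk3_i ei mul0r.
  + by rewrite mk3_j // mul1r.
  + by rewrite mk3_k.
Qed.

Lemma two_lines (chR : chain_ring R) x y (i j k : 'I_3) beta e : x i = 1 ->
  [&& i != j, i != k & j != k] -> e i = 0 -> e j \in radR R -> e k \in radR R ->
  (e j != 0) || (e k != 0) -> y = vadd (vsmul x beta) e ->
  exists w1 w2, [/\ is_line (span2 x w1), is_line (span2 x w2),
     span2 x w1 != span2 x w2, y \in span2 x w1 & y \in span2 x w2].
Proof.
move=> hx /and3P[hij hik hjk] ei ej ek ne ->.
case: (chainP chR (e j) (e k)) => [[r er]|[r er]].
- have ek0 : e k != 0.
    by apply/negP => /eqP e0; move: ne; rewrite er e0 mulr0 eqxx.
  have [s s0 hs] := left_ann chR ek.
  exists (mk3 i j 0 r 1), (mk3 i j 0 (r + s) 1); split.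
  + by apply: (line_xw (l := k) hx (mk3_i _ _ _ _ _)); [rewrite eq_sym | exact: mk3_k].
  + by apply: (line_xw (l := k) hx (mk3_i _ _ _ _ _)); [rewrite eq_sym | exact: mk3_k].
  + have hn : mk3 i j 0 (r + s) 1 \notin span2 x (mk3 i j 0 r 1).
      apply: (notin_span2 (l := k) (l' := j) hx (mk3_i i j 0 r 1) (mk3_i i j 0 (r + s) 1)
        (mk3_k 0 (r) 1 hik hjk) (mk3_k 0 (r+s) 1 hik hjk)).
      by rewrite !mk3_j // -subr_eq0 opprD addrA subrr sub0r oppr_eq0.
    apply/negP => /eqP eL; move/negP: hn; apply; rewrite eL.
    by apply/span2P; exists 0, 1; apply/vecP => l; rewrite vaddE !vsmulE mulr0 add0r mulr1.
  + apply: (@dec_in _ _ beta e (e k)) => l.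
    case/or3P: (ord3_cases l hij hik hjk) => /eqP ->.
    * by rewrite mk3_i ei mul0r.
    * by rewrite mk3_j.
    * by rewrite mk3_k // mul1r.
  + apply: (@dec_in _ _ beta e (e k)) => l.
    case/or3P: (ord3_cases l hij hik hjk) => /eqP ->.
    * by rewrite mk3_i ei mul0r.
    * by rewrite mk3_j // mulrDl hs addr0.
    * by rewrite mk3_k // mul1r.
- have ej0 : e j != 0.
    by apply/negP => /eqP e0; move: ne; rewrite er e0 mulr0 eqxx.
  have [s s0 hs] := left_ann chR ej.
  exists (mk3 i j 0 1 r), (mk3 i j 0 1 (r + s)); split.
  + by apply: (line_xw (l := j) hx (mk3_i _ _ _ _ _)); [rewrite eq_sym | exact: mk3_j].
  + by apply: (line_xw (l := j) hx (mk3_i _ _ _ _ _)); [rewrite eq_sym | exact: mk3_j].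
  + have hn : mk3 i j 0 1 (r + s) \notin span2 x (mk3 i j 0 1 r).
      apply: (notin_span2 (l := j) (l' := k) hx (mk3_i i j 0 1 r) (mk3_i i j 0 1 (r + s))
        (mk3_j 0 1 (r) hij) (mk3_j 0 1 (r+s) hij)).
      by rewrite !mk3_k // -subr_eq0 opprD addrA subrr sub0r oppr_eq0.
    apply/negP => /eqP eL; move/negP: hn; apply; rewrite eL.
    by apply/span2P; exists 0, 1; apply/vecP => l; rewrite vaddE !vsmulE mulr0 add0r mulr1.
  + apply: (@dec_in _ _ beta e (e j)) => l.
    case/or3P: (ord3_cases l hij hik hjk) => /eqP ->.
    * by rewrite mk3_i ei mul0r.
    * by rewrite mk3_j // mul1r.
    * by rewrite mk3_k.
  + apply: (@dec_in _ _ beta e (e j)) => l.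
    case/or3P: (ord3_cases l hij hik hjk) => /eqP ->.
    * by rewrite mk3_i ei mul0r.
    * by rewrite mk3_j // mul1r.
    * by rewrite mk3_k // mulrDl hs addr0.
Qed.

End Geo.

Section Lines.
Local Open Scope ring_scope.
Variable R : finNzRingType.
Hypothesis chR : chain_ring R.
Implicit Types a b c d r s u : R.
Implicit Types x y z w v e : vec R.

Lemma vaddC x y : vadd x y = vadd y x.
Proof. by apply/vecP => l; rewrite !vaddE addrC. Qed.

Lemma line_normal x (i j k : 'I_3) L : x i = 1 -> [&& i != j, i != k & j != k] ->
  is_line L -> span1 x \subset L ->
  exists2 w, w \in [set mk3 i j 0 1 c | c in [set: R]] :|: [set mk3 i j 0 d 1 | d in radR R]
     & L = span2 x w.
Proof.
move=> hx /and3P[hij hik hjk] /existsP[a /existsP[b /andP[/eqP eL0 hab0]]] sub.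
have eL : L = span2 a b := eL0.
have hab : indep a b := hab0.
clear eL0 hab0.
have xL : x \in L by move/subsetP: sub; apply; exact: span1_self.
have /span2P[al [be ex]] : x \in span2 a b by rewrite -eL.
have [w1 [eL' iw1]] : exists w1, L = span2 x w1 /\ indep x w1.
  case: (boolP (is_unitR al)) => ual.
    exists b; split.
      by rewrite eL span2C (span2_change b a be ual) -ex span2C.
    apply: indepC; rewrite ex; exact: (indep_change be ual (indepC hab)).
  have ube : is_unitR be.
    case: (boolP (is_unitR be)) => // nbe; move: (rad1 R); rewrite -hx ex vaddE !vsmulE => /negP; case.
    by apply: radD; apply: radMl; rewrite (radE chR) //.
  exists a; split; first by rewrite eL (span2_change a b al ube) vaddC -ex span2C.
  by apply: indepC; rewrite ex vaddC; exact: (indep_change al ube hab).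
pose w0 := vadd (vsmul w1 1) (vsmul x (- w1 i)).
have eL0 : L = span2 x w0 by rewrite eL' (span2_change x w1 (- w1 i) (unit1 R)).
have i0 : indep x w0 := indep_change (- w1 i) (unit1 R) iw1.
have w0i : w0 i = 0 by rewrite vaddE !vsmulE hx mul1r mulr1 subrr.
have fw0 : vfree w0.
  apply/vfreeP => s es; move/indepP: i0 => /(_ 0 s) [] //.
  by apply/vecP => l; rewrite vaddE !vsmulE mulr0 add0r -vsmulE es.
have [l ul] := free_unit chR fw0.
case: (boolP (is_unitR (w0 j))) => uj.
  exists (vadd (vsmul w0 (uinv (w0 j))) (vsmul x 0)).
    apply/setUP; left; apply/imsetP; exists (w0 k * uinv (w0 j)); rewrite ?inE //.
    apply/vecP => l'; rewrite vaddE !vsmulE mulr0 addr0.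
    case/or3P: (ord3_cases l' hij hik hjk) => /eqP ->.
    + by rewrite mk3_i w0i mul0r.
    + by rewrite mk3_j // mulrV_u.
    + by rewrite mk3_k.
  by rewrite {1}eL0 (span2_change x w0 0 (unit_uinv uj)).
have lk : l = k.
  case/or3P: (ord3_cases l hij hik hjk) => /eqP el; rewrite el in ul => //.
    by move: ul; rewrite w0i (negPf (nunit0 R)).
  by move: ul; rewrite (negPf uj).
rewrite lk in ul.
exists (vadd (vsmul w0 (uinv (w0 k))) (vsmul x 0)).
  apply/setUP; right; apply/imsetP; exists (w0 j * uinv (w0 k)).
    by apply: radMr => //; rewrite (radE chR).
  apply/vecP => l'; rewrite vaddE !vsmulE mulr0 addr0.
  case/or3P: (ord3_cases l' hij hik hjk) => /eqP ->.
  + by rewrite mk3_i w0i mul0r.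
  + by rewrite mk3_j.
  + by rewrite mk3_k // mulrV_u.
by rewrite {1}eL0 (span2_change x w0 0 (unit_uinv ul)).
Qed.

Lemma lines_through_card x (i j k : 'I_3) : x i = 1 -> [&& i != j, i != k & j != k] ->
  (#|[set L | is_line L && (span1 x \subset L)]| <= #|[set: R]| + #|radR R|)%N.
Proof.
move=> hx hd.
pose N := [set mk3 i j 0 1 c | c in [set: R]] :|: [set mk3 i j 0 d 1 | d in radR R].
pose f L := odflt (vzero R) [pick w in N | L == span2 x w].
set T := [set L | _].
have hf : forall L, L \in T -> f L \in N /\ L = span2 x (f L).
  move=> L; rewrite inE => /andP[hL hs]; rewrite /f; case: pickP => [w /andP[wN /eqP ->]|h] //.
  exfalso; have [w wN eL] := line_normal hx hd hL hs.
  by have := h w; rewrite wN eL eqxx.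
have -> : #|T| = #|f @: T|.
  apply/esym/card_in_imset => L1 L2 h1 h2 e.
  by rewrite (hf _ h1).2 (hf _ h2).2 e.
have sub : f @: T \subset N.
  by apply/subsetP => _ /imsetP[L hL ->]; exact: (hf _ hL).1.
apply: (leq_trans (subset_leq_card sub)).
rewrite /N; rewrite -(leq_add2r #|[set mk3 i j 0 1 c | c in [set: R]] :&: [set mk3 i j 0 d 1 | d in radR R]|) cardsUI.
apply: (leq_trans _ (leq_addr _ _)); by rewrite leq_add ?leq_imset_card.
Qed.

End Lines.

Section Pigeon.
Local Open Scope ring_scope.
Variable R : finNzRingType.
Hypothesis chR : chain_ring R.
Implicit Types a b c d r s u : R.
Implicit Types x y z w v e : vec R.

Definition radvec := [set z : vec R | [forall l, z l \in radR R]].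
Definition Vset x := [set vadd (vsmul x u) z | u in ~: radR R, z in radvec].

Lemma radvecP z : reflect (forall l, z l \in radR R) (z \in radvec).
Proof. by rewrite inE; apply: forallP. Qed.

Lemma Vset_card x (i j k : 'I_3) : x i = 1 -> [&& i != j, i != k & j != k] ->
  ((#|[set: R]| - #|radR R|) * #|radR R| * #|radR R| <= #|Vset x|)%N.
Proof.
move=> hx /and3P[hij hik hjk].
pose D := setX (setX (~: radR R) (radR R)) (radR R).
pose g (t : R * R * R) := vadd (vsmul x t.1.1) (mk3 i j 0 t.1.2 t.2).
have -> : ((#|[set: R]| - #|radR R|) * #|radR R| * #|radR R|)%N = #|D|.
  by rewrite !cardsX cardsT -(cardsC (radR R)) addKn.
rewrite -(@card_in_imset _ _ g).
  apply: subset_leq_card; apply/subsetP => _ /imsetP[[[u a] b] hD ->].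
  move: hD; rewrite !in_setX /= => /andP[/andP[hu ha] hb].
  apply/imset2P; exists u (mk3 i j 0 a b) => //.
  rewrite inE.
  apply/forallP => l; case/or3P: (ord3_cases l hij hik hjk) => /eqP ->.
  + by rewrite mk3_i rad0.
  + by rewrite mk3_j.
  + by rewrite mk3_k.
move=> [[u a] b] [[u0 a0] b0] _ _ /ffunP e0.
have e : forall l, vadd (vsmul x u) (mk3 i j 0 a b) l = vadd (vsmul x u0) (mk3 i j 0 a0 b0) l := e0.
have eu : u = u0.
  by have := e i; rewrite !vaddE !vsmulE !mk3_i hx !mul1r !addr0.
subst u0.
have ea : a = a0 by have := e j; rewrite !vaddE !vsmulE !mk3_j // => /addrI.
have eb : b = b0 by have := e k; rewrite !vaddE !vsmulE !mk3_k // => /addrI.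
by rewrite ea eb.
Qed.

Lemma Vset_free x (i : 'I_3) v : x i = 1 -> v \in Vset x -> vfree v.
Proof.
move=> hx /imset2P[u z hu /radvecP hz ->]; apply: vsmul_free_unit; exists i.
rewrite vaddE vsmulE hx mul1r; apply: unitD_rad => //; apply: nrad_unit => //.
by move: hu; rewrite inE.
Qed.

Lemma Vset_neighbor x y v : v \in Vset x -> v \in Vset y ->
  exists al e, [/\ is_unitR al, e \in radvec & y = vadd (vsmul x al) e].
Proof.
move=> /imset2P[u z hu /radvecP hz ->] /imset2P[u' z' hu' /radvecP hz' /ffunP ev].
have uu : is_unitR u by apply: nrad_unit => //; move: hu; rewrite inE.
have uu' : is_unitR u' by apply: nrad_unit => //; move: hu'; rewrite inE.
exists (u * uinv u'), [ffun l => (z l - z' l) * uinv u']; split.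
- by apply: unitM => //; exact: unit_uinv.
- by apply/radvecP => l; rewrite ffunE; apply: radMr => //; apply: radB.
apply/vecP => l; have := ev l; rewrite !vaddE !vsmulE ffunE => el.
have : y l = (x l * u + z l - z' l) * uinv u'.
  by rewrite el addrK -mulrA mulrV_u // mulr1.
by move=> ->; rewrite !mulrBl mulrDl !mulrA addrA.
Qed.

Lemma neighbor_two_lines x y (i j k : 'I_3) al e : x i = 1 ->
  [&& i != j, i != k & j != k] -> span1 y != span1 x ->
  is_unitR al -> e \in radvec -> y = vadd (vsmul x al) e ->
  exists w1 w2, [/\ is_line (span2 x w1), is_line (span2 x w2),
     span2 x w1 != span2 x w2, y \in span2 x w1 & y \in span2 x w2].
Proof.
move=> hx hd ne ual /radvecP he ey.
have /and3P[hij hik hjk] := hd.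
pose e' := [ffun l => e l - x l * e i].
have ey' : y = vadd (vsmul x (al + e i)) e'.
  apply/vecP => l; rewrite ey !vaddE !vsmulE ffunE mulrDr -addrA; congr (_ + _).
  by rewrite addrC subrK.
apply: (two_lines chR (j := j) (k := k) hx hd _ _ _ _ ey').
- by rewrite ffunE hx mul1r subrr.
- by rewrite ffunE radB // radMl.
- by rewrite ffunE radB // radMl.
case: (boolP ((e' j != 0) || (e' k != 0))) => // /norP[/negPn/eqP ej /negPn/eqP ek].
move/negP: ne; case.
have ei : e' i = 0 by rewrite ffunE hx mul1r subrr.
have -> : y = vsmul x (al + e i).
  rewrite ey'; apply/vecP => l; rewrite vaddE.
  by case/or3P: (ord3_cases l hij hik hjk) => /eqP ->; rewrite ?ei ?ej ?ek addr0.
by rewrite span1_unit // unitD_rad.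
Qed.

Lemma point_norm P : is_point P -> exists x (i : 'I_3), P = span1 x /\ x i = 1.
Proof.
rewrite pointE => /existsP[x0 /andP[/eqP eP fx]].
have [i ui] := free_unit chR fx.
exists (vsmul x0 (uinv (x0 i))), i; split.
  by rewrite span1_unit // unit_uinv.
by rewrite vsmulE mulrV_u.
Qed.

End Pigeon.

Section Count.
Local Open Scope ring_scope.
Variable R : finNzRingType.
Hypothesis chR : chain_ring R.

Definition Tl (P : {set vec R}) := [set L | is_line L && (P \subset L)].
Definition lam (P X : {set vec R}) := #|[set L | (L \in Tl P) && (X \subset L)]|.

Lemma lam1 P Q : is_point P -> is_point Q -> (0 < lam P Q)%N.
Proof.
move=> /(point_norm chR)[x [i [eP hx]]] /(point_norm chR)[y [i' [eQ _]]].
have [j [k hd]] := ord3_other i.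
have [w [hl hy]] := through chR y hx hd.
rewrite card_gt0; apply/set0Pn; exists (span2 x w); rewrite !inE hl /= eP eQ.
by rewrite !span2_sub1 // x_in_span2.
Qed.

Lemma lamP P : lam P P = #|Tl P|.
Proof. by apply: eq_card => L; rewrite !inE -andbA andbb. Qed.

Lemma T_bound P : is_point P -> (#|Tl P| <= #|[set: R]| + #|radR R|)%N.
Proof.
move=> /(point_norm chR)[x [i [eP hx]]].
have [j [k hd]] := ord3_other i.
have h := lines_through_card chR hx hd; apply: leq_trans h; apply: subset_leq_card; apply/subsetP => L; rewrite !inE eP; exact: id.
Qed.

Lemma count_at (k : {set vec R} -> nat) n P :
  (forall L, is_line L -> (\sum_(X | is_point X && (X \subset L)) k X <= 2)%N) ->
  (\sum_(X | is_point X) k X)%N = n -> is_point P ->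
  (n + k P * (#|Tl P| - 1) + \sum_(X | is_point X && (X != P)) k X * (lam P X - 1)
     <= 2 * #|Tl P|)%N.
Proof.
move=> kline ksum hP.
have H1 : (\sum_(L in Tl P) \sum_(X | is_point X && (X \subset L)) k X <= \sum_(L in Tl P) 2)%N.
  by apply: leq_sum => L; rewrite inE => /andP[hL _]; exact: kline.
rewrite sum_nat_const mulnC in H1.
have H2 : (\sum_(L in Tl P) \sum_(X | is_point X && (X \subset L)) k X =
           \sum_(X | is_point X) k X * lam P X)%N.
  under eq_bigr do rewrite big_mkcondr.
  rewrite exchange_big /=; apply: eq_bigr => X hX.
  rewrite -big_mkcondr /= sum_nat_cond_const mulnC; congr (_ * _)%N.
have H3 : (\sum_(X | is_point X) k X * lam P X =
          n + \sum_(X | is_point X) k X * (lam P X - 1))%N.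
  rewrite -ksum -big_split /=; apply: eq_bigr => X hX.
  by rewrite -{1}(subnK (lam1 hP hX)) mulnDr muln1 addnC.
have H4 : (\sum_(X | is_point X) k X * (lam P X - 1) = k P * (#|Tl P| - 1) +
    \sum_(X | is_point X && (X != P)) k X * (lam P X - 1))%N.
  by rewrite (bigD1 P) //= lamP.
by rewrite -addnA -H4 -H3 -H2.
Qed.

End Count.

Definition gen (R : finNzRingType) (P : {set vec R}) : vec R :=
  odflt (vzero R) [pick x | (P == span1 x) && [exists i, x i == 1%R]].

Lemma gen_spec (R : finNzRingType) (chR : chain_ring R) (P : {set vec R}) : is_point P ->
  P = span1 (gen P) /\ exists i, gen P i = 1%R.
Proof.
move=> hP; rewrite /gen; case: pickP => [x /andP[/eqP eP /existsP[i /eqP hi]]|h] /=.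
  by split => //; exists i.
exfalso; have [x [i [eP hx]]] := point_norm chR hP.
have := h x; rewrite eP eqxx /= => /negbT/negP; apply; apply/existsP; exists i; exact/eqP.
Qed.

Theorem mainTheorem2 (R : finNzRingType) (m : nat) :
  chain_ring R -> comp_length R m -> (3 <= m)%N ->
  ~ (exists k : {set vec R} -> nat,
       is_arc k (residue_order R ^ m + residue_order R ^ (m - 1) + 1)%N 2).
Proof.
move=> chR hm m3 [k [ksupp [ksum kline]]].
have q2 : (2 <= residue_order R)%N := residue_ge2 R.
have hr : (#|radR R| <= residue_order R ^ (m - 1))%N := rad_bound hm.
have hNR : #|[set: R]| = (residue_order R * #|radR R|)%N := card_R_rad R.
have r0 : (0 < #|radR R|)%N := rad_card_gt0 R.
move: ksum q2 hr hNR r0.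
set q := residue_order R; set r := #|radR R|.
have hqm : q ^ m = (q * q ^ (m - 1))%N.
  by rewrite -expnS; congr (_ ^ _); lia.
have hp : (q * q <= q ^ (m - 1))%N.
  move=> /=; rewrite mulnn; apply: leq_pexp2l; first by have := residue_ge2 R; rewrite -/q; lia.
  lia.
move: hp; rewrite hqm; set p := q ^ (m - 1).
set n := (q * p + p + 1)%N => hp ksum q2 hr hNR r0.
have kle1 : forall P, (k P <= 1)%N.
  move=> P; rewrite leqNgt; apply/negP => kP2.
  have hP : is_point P by apply: ksupp; lia.
  have := count_at chR kline ksum hP.
  have := lam1 chR hP hP; rewrite lamP.
  set t := #|Tl P|; set S := (\sum_(X | _) _)%N => t1.
  have : (2 * (t - 1) <= k P * (t - 1))%N by rewrite leq_mul2r kP2 orbT.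
  lia.
pose K := [set P | (0 < k P)%N].
have cardK : #|K| = n.
  rewrite -ksum.
  have -> : (\sum_(X | is_point X) k X = \sum_(X | is_point X) (0 < k X : nat))%N.
    by apply: eq_bigr => X _; have := kle1 X; case: (k X) => [|[|]].
  have -> : (\sum_(X | is_point X) (0 < k X : nat) = \sum_(X | is_point X && (0 < k X)%N) 1)%N.
    by rewrite big_mkcondr; apply: eq_bigr => X _; case: (0 < k X)%N.
  rewrite sum_nat_cond_const muln1; apply: eq_card => X; rewrite !inE.
  by case: (boolP (0 < k X)%N) => h; rewrite ?andbF ?andbT ?ksupp.
(* step 3: no two support points are neighbours *)
have key : forall P Q, P \in K -> Q \in K -> P != Q ->
    forall v, v \in Vset (gen P) -> v \in Vset (gen Q) -> False.
  move=> P Q hPK hQK nPQ v vP vQ.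
  move: hPK hQK; rewrite !inE => kP kQ.
  have hP := ksupp P kP; have hQ := ksupp Q kQ.
  have [eP [i hi]] := gen_spec chR hP.
  have [eQ _] := gen_spec chR hQ.
  have [al [e [ual he ey]]] := Vset_neighbor chR vP vQ.
  have [j [k' hd]] := ord3_other i.
  have ne : span1 (gen Q) != span1 (gen P) by rewrite -eP -eQ eq_sym.
  have [w1 [w2 [l1 l2 n12 y1 y2]]] := neighbor_two_lines chR hi hd ne ual he ey.
  have lam2 : (2 <= lam P Q)%N.
    have sub : [set span2 (gen P) w1; span2 (gen P) w2] \subset
               [set L | (L \in Tl P) && (Q \subset L)].
      apply/subsetP => L; rewrite !inE => /orP[] /eqP ->; rewrite ?l1 ?l2 /=;
        rewrite {1}eP {1}eQ !span2_sub1 ?x_in_span2 //.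
    by have := subset_leq_card sub; rewrite cards2 n12.
  have := count_at chR kline ksum hP.
  have sQ : (k Q * (lam P Q - 1) <= \sum_(X | is_point X && (X != P)) k X * (lam P X - 1))%N.
    by rewrite (bigD1 Q) /= ?hQ ?(eq_sym Q) ?nPQ // leq_addr.
  have tb := T_bound chR hP; rewrite hNR -/r in tb.
  have qrp : (q * r <= q * p)%N by rewrite leq_mul2l hr orbT.
  have kP1 : k P = 1%N by apply/eqP; rewrite eqn_leq kle1 kP.
  have kQ1 : k Q = 1%N by apply/eqP; rewrite eqn_leq kle1 kQ.
  rewrite kP1 mul1n; rewrite kQ1 mul1n in sQ.
  move: sQ lam2 tb qrp hr; rewrite /n.
  set t := #|Tl P|; set S := (\sum_(X | _) _)%N; set l := lam P Q.
  set qr := (q * r)%N; set qp := (q * p)%N.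
  move=> h1 h2 h3 h4 h5 h6; clear -h1 h2 h3 h4 h5 h6.
  lia.
(* step 4: counting free vectors *)
pose V (P : {set vec R}) := Vset (gen P).
have lowV : forall P, P \in K -> ((#|[set: R]| - r) * r * r <= #|V P|)%N.
  move=> P; rewrite inE => kP; have [_ [i hi]] := gen_spec chR (ksupp P kP).
  have [j [k' hd]] := ord3_other i.
  exact: Vset_card hi hd.
have sumV : (\sum_(P in K) #|V P| <= #|[set v : vec R | vfree v]|)%N.
  rewrite -sum1_card.
  have -> : (\sum_(P in K) #|V P| = \sum_(P in K) \sum_(v : vec R) (v \in V P : nat))%N.
    apply: eq_bigr => P _; rewrite -sum1_card big_mkcond /=.
    by apply: eq_bigr => v _; case: (v \in V P).
  rewrite exchange_big /= [X in (_ <= X)%N]big_mkcond /=.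
  apply: leq_sum => v _.
  rewrite -big_mkcondr /= sum_nat_cond_const muln1 /=.
  case: (boolP (v \in [set v0 : vec R | vfree v0])) => hv.
    apply/card_le1_eqP => P1 P2; rewrite !inE => /andP[h1 v1] /andP[h2 v2].
    case: (eqVneq P1 P2) => // n12; exfalso.
    have hP1 : P1 \in K by rewrite inE.
    have hP2 : P2 \in K by rewrite inE.
    exact: (key _ _ hP1 hP2 n12 _ v1 v2).
  rewrite leqn0 cards_eq0; apply/eqP/setP => P; rewrite !inE.
  apply/negbTE/negP => /andP[kP vP]; move/negP: hv; apply; rewrite inE.
  have [_ [i hi]] := gen_spec chR (ksupp P kP).
  exact: (@Vset_free R chR (gen P) i v hi vP).
have freeB : (#|[set v : vec R | vfree v]| + r ^ 3 <= (q * r) ^ 3)%N.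
  have hrv : #|radvec R| = (r ^ 3)%N.
    rewrite (eq_card (B := ffun_on (radR R))); first by rewrite card_ffun_on card_ord.
    by move=> z; rewrite inE; apply/forallP/ffun_onP.
  rewrite -hrv -hNR cardsT.
  have -> : (#|R| ^ 3)%N = #|vec R| by rewrite /vec card_ffun card_ord.
  rewrite -cardsUI.
  have -> : [set v : vec R | vfree v] :&: radvec R = set0.
    apply/setP => z; rewrite !inE; apply/negP => /andP[fz /forallP hz].
    have [i ui] := free_unit chR fz.
    by have := rad_nunit (hz i); rewrite ui.
  by rewrite cards0 addn0 max_card.
have h1 : (\sum_(P in K) ((#|[set: R]| - r) * r * r) <= \sum_(P in K) #|V P|)%N.
  by apply: leq_sum.
rewrite sum_nat_const cardK hNR in h1.
have h2 := leq_trans h1 sumV.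
have h3 : (n * ((q * r - r) * r * r) + r ^ 3 <= (q * r) ^ 3)%N.
  by apply: (leq_trans _ freeB); rewrite leq_add2r.
have e1 : (q * r - r = (q - 1) * r)%N by rewrite mulnBl mul1n.
rewrite e1 in h3.
have h4 : (r ^ 3 * (n * (q - 1) + 1) <= r ^ 3 * q ^ 3)%N.
  have e2 : (n * ((q - 1) * r * r * r) + r ^ 3 = r ^ 3 * (n * (q - 1) + 1))%N.
    rewrite !expnS expn0; move: (q - 1)%N => s; clear; nia.
  have e3 : (r ^ 3 * q ^ 3 = (q * r) ^ 3)%N by rewrite expnMn mulnC.
  by rewrite -e2 e3.
rewrite leq_pmul2l ?expn_gt0 ?r0 // in h4.
rewrite !expnS expn0 /n in h4.
move: h4 hp q2; clear; move=> h4 hp q2.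
nia.
Qed.
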